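(* Let $\mathcal S=(\mathcal P,\mathcal L)$ be a linear space with $v$ points and constant line size $k$, $2<k<v$, and $b$ lines; let $G\le\mathrm{Aut}(\mathcal S)$ be transitive on lines, and let $\mathfrak C$ be a non-trivial $G$-invariant partition of $\mathcal P$ with $d$ classes of size $c$. If the permutation group $G^{\mathfrak C}$ induced by $G$ on $\mathfrak C$ is $t$-transitive, then $t\le t_{\max}$.
   Context: A linear space: a finite set $\mathcal P$ of points and a set $\mathcal L$ of subsets (lines) such that any two distinct points lie on exactly one line and each line has at least two points. For a line $\lambda$ and $0\le i\le k$, $d_i$ is the number of classes $C\in\mathfrak C$ with $|C\cap\lambda|=i$ (independent of $\lambda$); $\mathrm{spec}\,\mathcal S=\{i>0:d_i\ne0\}$. For a non-empty $S\subseteq\mathrm{spec}\,\mathcal S$ put $d(S)=\sum_{i\in S}d_i$. Define $t_{\max}$ to be the largest positive integer $t\le d$ such that for all non-empty $S\subseteq\mathrm{spec}\,\mathcal S$ and all positive integers $h\le\min\{t,d(S)\}$, the number $\prod_{j=0}^{h-1}(d-j)$ divides $b\prod_{j=0}^{h-1}(d(S)-j)$. *)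

(* Defs.v *)
From mathcomp Require Import all_boot all_fingroup.
Set Implicit Arguments. Unset Strict Implicit. Unset Printing Implicit Defensive.

Section Defs.
Variable T : finType.

Definition linear_space (L : {set {set T}}) : Prop :=
  (forall l, l \in L -> 2 <= #|l|) /\
  (forall x y : T, x != y -> exists! l, l \in L /\ x \in l /\ y \in l).

Definition is_aut (L : {set {set T}}) (g : {perm T}) : Prop :=
  forall l : {set T}, (g @: l \in L) = (l \in L).

Definition line_transitive (L : {set {set T}}) (G : {group {perm T}}) : Prop :=
  forall l1 l2, l1 \in L -> l2 \in L -> exists2 g, g \in G & g @: l1 = l2.

Definition G_invariant (C : {set {set T}}) (G : {group {perm T}}) : Prop :=
  forall g X, g \in G -> X \in C -> g @: X \in C.

Definition induced_t_transitive (C : {set {set T}}) (G : {group {perm T}})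
    (t : nat) : Prop :=
  t <= #|C| /\
  forall s1 s2 : seq {set T},
    size s1 = t -> size s2 = t -> uniq s1 -> uniq s2 ->
    {subset s1 <= C} -> {subset s2 <= C} ->
    exists2 g, g \in G & map (fun X : {set T} => g @: X) s1 = s2.

Definition dcount (C : {set {set T}}) (lam : {set T}) (i : nat) : nat :=
  #|[set X in C | #|X :&: lam| == i]|.

Definition in_spec (C : {set {set T}}) (lam : {set T}) (k : nat)
    (S : {set 'I_k.+1}) : bool :=
  (S != set0) && [forall i in S, (0 < i) && (dcount C lam i != 0)].

Definition dS (C : {set {set T}}) (lam : {set T}) (k : nat)
    (S : {set 'I_k.+1}) : nat :=
  \sum_(i in S) dcount C lam i.

Definition tmax_cond (C : {set {set T}}) (lam : {set T}) (k b d t : nat) : bool :=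
  [forall S : {set 'I_k.+1}, in_spec C lam S ==>
     [forall h : 'I_(t.+1), (0 < h) && (h <= dS C lam S) ==>
        (d ^_ h %| b * (dS C lam S) ^_ h)]].

Definition tmax (C : {set {set T}}) (lam : {set T}) (k b d : nat) : nat :=
  \max_(t < d.+1 | (0 < t) && tmax_cond C lam k b d t) t.

End Defs.

(* Main.v *)
Require Import Defs.
From mathcomp Require Import all_boot all_fingroup.
Set Implicit Arguments. Unset Strict Implicit. Unset Printing Implicit Defensive.

Lemma card_imI (T : finType) (g : {perm T}) (X l : {set T}) :
  #|(g @: X) :&: (g @: l)| = #|X :&: l|.
Proof. by rewrite -imsetI ?card_imset //; [exact: perm_inj | move=> ? ? _ _; exact: perm_inj]. Qed.

Lemma cardb (X : finType) (P : pred X) : #|[set x | P x]| = \sum_(x : X) (P x : nat).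
Proof.
rewrite -sum1dep_card big_mkcond /=; apply: eq_bigr => x _; by case: (P x).
Qed.

Lemma ext_seq (U : finType) (C : {set U}) (q : seq U) (t : nat) :
  uniq q -> {subset q <= C} -> size q <= t -> t <= #|C| ->
  exists r : seq U, [/\ size r = t, uniq r, {subset r <= C} & take (size q) r = q].
Proof.
move=> uq sq qt tC.
set w := q ++ [seq X <- enum C | X \notin q].
have uw : uniq w.
  rewrite cat_uniq uq filter_uniq ?enum_uniq //= andbT.
  apply/hasPn => x; rewrite mem_filter; by case/andP.
have mw : w =i C.
  move=> x; rewrite mem_cat mem_filter mem_enum.
  case xq: (x \in q) => /=; last by [].
  by rewrite (sq _ xq).
have sw : size w = #|C|.
  by rewrite -(card_uniqP uw); apply: eq_card.
exists (take t w); split.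
- by rewrite size_takel // sw.
- exact: take_uniq.
- by move=> x /mem_take; rewrite mw.
- by rewrite take_takel // take_size_cat.
Qed.

Lemma trans_h (T : finType) (C : {set {set T}}) (G : {group {perm T}}) t h :
  induced_t_transitive C G t -> h <= t ->
  forall s1 s2 : seq {set T},
    size s1 = h -> size s2 = h -> uniq s1 -> uniq s2 ->
    {subset s1 <= C} -> {subset s2 <= C} ->
    exists2 g, g \in G & map (fun X : {set T} => g @: X) s1 = s2.
Proof.
move=> [tC tr] ht s1 s2 z1 z2 u1 u2 c1 c2.
have [r1 [r1t ur1 cr1 tk1]] := ext_seq (t:=t) u1 c1 (ltac:(by rewrite z1)) tC.
have [r2 [r2t ur2 cr2 tk2]] := ext_seq (t:=t) u2 c2 (ltac:(by rewrite z2)) tC.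
have [g gG e] := tr r1 r2 r1t r2t ur1 ur2 cr1 cr2.
exists g => //.
by rewrite -tk1 -tk2 z1 z2 map_take e.
Qed.

Section Main.
Variables (T : finType) (L : {set {set T}}) (G : {group {perm T}}) (C : {set {set T}}) (k : nat).
Hypothesis autG : forall g, g \in G -> is_aut L g.
Hypothesis invC : G_invariant C G.
Variable S : {set 'I_k.+1}.

Definition good (l X : {set T}) := [exists i in S, #|X :&: l| == i].
Definition A l := [set X in C | good l X].

Lemma good_im (g : {perm T}) (l X : {set T}) : good (g @: l) (g @: X) = good l X.
Proof. by rewrite /good card_imI. Qed.

Lemma A_le g (l : {set T}) : g \in G -> #|A l| <= #|A (g @: l)|.
Proof.
move=> gG; rewrite -(card_imset (A l) (imset_inj (@perm_inj _ g))).
apply: subset_leq_card; apply/subsetP => Y /imsetP [X]; rewrite !inE => /andP [XC gX] ->.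
by rewrite invC // good_im.
Qed.

Definition Q l (s : seq {set T}) := all (good l) s.

Lemma N_le g (s : seq {set T}) : g \in G ->
  #|[set l in L | Q l s]| <= #|[set l in L | Q l (map (fun X : {set T} => g @: X) s)]|.
Proof.
move=> gG; rewrite -(card_imset [set l in L | Q l s] (imset_inj (@perm_inj _ g))).
apply: subset_leq_card; apply/subsetP => Y /imsetP [l]; rewrite !inE => /andP [lL gl] ->.
rewrite (autG gG) lL /= /Q all_map.
by apply: sub_all gl => X /=; rewrite good_im.
Qed.

End Main.

Section Main2.
Variables (T : finType) (L : {set {set T}}) (G : {group {perm T}}) (C : {set {set T}}) (k t h : nat).
Hypothesis autG : forall g, g \in G -> is_aut L g.
Hypothesis invC : G_invariant C G.
Hypothesis ltr : line_transitive L G.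
Hypothesis ttr : induced_t_transitive C G t.
Hypothesis ht : h <= t.
Variable S : {set 'I_k.+1}.
Variable lam : {set T}.
Hypothesis lamL : lam \in L.

Lemma Aconst l : l \in L -> #|A C S l| = #|A C S lam|.
Proof.
move=> lL; have [g gG e] := ltr lamL lL; have [g' g'G e'] := ltr lL lamL.
apply/eqP; rewrite eqn_leq; apply/andP; split.
- rewrite -e'; exact: (A_le invC S l g'G).
- rewrite -e; exact: (A_le invC S lam gG).
Qed.

Lemma div_main : #|C| ^_ h %| #|L| * #|A C S lam| ^_ h.
Proof.
set F := fun s : h.-tuple {set T} => all (mem C) s && uniq s.
have E1 : #|L| * #|A C S lam| ^_ h =
   \sum_(s : h.-tuple {set T}) \sum_(l in L) ((F s && Q S l s) : nat).
  rewrite exchange_big -sum_nat_const /=.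
  apply: eq_bigr => l lL; rewrite -(Aconst lL).
  have := card_uniq_tuples h (mem (A C S l)); rewrite cardb => <-.
  apply: eq_bigr => s _; rewrite /F -andbA [uniq s && _]andbC andbA -all_predI.
  congr (nat_of_bool (_ && _)); apply: eq_all => X /=; by rewrite inE.
rewrite E1.
case: (pickP F) => [s0 Fs0 | none]; last first.
  by rewrite big1 // => s _; rewrite none big1.
have E2 : forall s, \sum_(l in L) ((F s && Q S l s) : nat) =
                    F s * #|[set l in L | Q S l s0]|.
  move=> s; case Fs: (F s); last by rewrite big1 ?mul0n.
  rewrite mul1n.
  have -> : #|[set l in L | Q S l s0]| = #|[set l in L | Q S l s]|.
    move: Fs0 Fs; rewrite /F => /andP [c0 u0] /andP [c1 u1].
    have [g gG e] := trans_h ttr ht (size_tuple s0) (size_tuple s) u0 u1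
                       (fun x => allP c0 x) (fun x => allP c1 x).
    have [g' g'G e'] := trans_h ttr ht (size_tuple s) (size_tuple s0) u1 u0
                       (fun x => allP c1 x) (fun x => allP c0 x).
    apply/eqP; rewrite eqn_leq; apply/andP; split.
    - by rewrite -e; exact: (N_le autG S s0 gG).
    - by rewrite -e'; exact: (N_le autG S s g'G).
  rewrite cardb big_mkcond /=; apply: eq_bigr => l _; case: (l \in L) => //=; move: Fs; rewrite /F /= => ->.
rewrite (eq_bigr _ (fun s _ => E2 s)) -big_distrl /=.
have := card_uniq_tuples h (mem C); rewrite cardb => E3.
have -> : \sum_i (F i : nat) = #|C| ^_ h by rewrite -E3.
exact: dvdn_mulr.
Qed.

End Main2.

Lemma A_dS (T : finType) (C : {set {set T}}) k (S : {set 'I_k.+1}) lam :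
  #|A C S lam| = dS C lam S.
Proof.
rewrite /dS /dcount; under eq_bigr do rewrite cardb.
rewrite exchange_big cardb /=; apply: eq_bigr => X _.
case XC: (X \in C) => /=; last by rewrite big1.
rewrite /good; case: existsP => [[i0 /andP [i0S /eqP e]] | ne].
  rewrite (bigD1 i0) //= e eqxx big1 // => i /andP [_ ni].
  case: eqP => // /ord_inj ei; by rewrite ei eqxx in ni.
rewrite big1 // => i iS; case: eqP => // e; by case: ne; exists i; rewrite iS e /=.

Qed.

Unset Implicit Arguments.
Theorem lemma4p7 (T : finType) (L : {set {set T}}) (G : {group {perm T}})
    (C : {set {set T}}) (v k b d c t : nat) :
  linear_space L ->
  #|T| = v -> (forall l, l \in L -> #|l| = k) -> 2 < k -> k < v ->
  #|L| = b ->
  (forall g, g \in G -> is_aut L g) ->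
  line_transitive L G ->
  partition C [set: T] -> G_invariant C G ->
  #|C| = d -> (forall X, X \in C -> #|X| = c) -> 1 < c -> 1 < d ->
  induced_t_transitive C G t ->
  forall lam, lam \in L -> t <= tmax C lam k b d.
Proof.
move=> _ _ _ _ _ Lb autG ltr _ invC Cd _ _ _ ttr lam lamL.
case: t ttr => [|t] ttr; first by [].
have td : t.+1 < d.+1 by rewrite ltnS -Cd; case: ttr.
rewrite /tmax; apply: (leq_bigmax_cond (Ordinal td)) => /=.
apply/forallP => S; apply/implyP => _; apply/forallP => h; apply/implyP => _.
rewrite -A_dS -Cd -Lb.
apply: (div_main autG invC ltr ttr _ S lamL).
by rewrite -ltnS.
Qed.
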